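(* Let $X$ be a semigroup and $S$ be one of the semigroups $\beta(X),\lambda(X),\varphi(X),N_2(X),\upsilon(X)$. If $S$ is regular, then for every subsemigroup $Z\subset X$ whose complement $X\setminus Z$ is an ideal in $X$, the semigroup $S\cap\upsilon(Z)$ is regular.
   Context: An upfamily on a set $X$ is a family of nonempty subsets of $X$ closed under taking supersets in $X$; $\upsilon(X)$ is the set of all upfamilies. $N_2(X)$, $\lambda(X)$, $\varphi(X)$, $\beta(X)$ are the sets of linked upfamilies (any two members intersect), maximal linked upfamilies, filters, and ultrafilters on $X$. The operation is $\mathcal A*\mathcal B=\big\langle \bigcup_{a\in A} a*B_a : A\in\mathcal A,\ \{B_a\}_{a\in A}\subset\mathcal B\big\rangle$, where $\langle\mathcal C\rangle=\{A\subset X:\exists C\in\mathcal C,\ C\subset A\}$; all these sets are subsemigroups of $\upsilon(X)$. For $Z\subset X$, $\upsilon(Z)$ is identified with the subset of $\upsilon(X)$ consisting of the upfamilies $\{A\subset X: A\cap Z\in\mathcal F\}$, $\mathcal F\in\upsilon(Z)$. A semigroup $S$ is regular if $x\in xSx$ for every $x\in S$. A nonempty $I\subset X$ is an ideal if $XI\cup IX\subset I$. *)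

(* Defs.v *)
From Stdlib Require Import Classical.

Set Implicit Arguments.

Definition set (X : Type) := X -> Prop.
Definition fam (X : Type) := set X -> Prop.

Section UpFamilies.
Variable X : Type.
Variable mul : X -> X -> X.

Definition subset (A B : set X) : Prop := forall x, A x -> B x.
Definition nonempty (A : set X) : Prop := exists x, A x.

Definition fam_eq (F G : fam X) : Prop := forall A, F A <-> G A.
Definition fam_sub (F G : fam X) : Prop := forall A, F A -> G A.

Definition upfamily (F : fam X) : Prop :=
  (forall A, F A -> nonempty A) /\
  (forall A B, F A -> subset A B -> F B).

Definition linked (F : fam X) : Prop :=
  upfamily F /\ forall A B, F A -> F B -> exists x, A x /\ B x.

Definition maximal_linked (F : fam X) : Prop :=
  linked F /\ forall G, linked G -> fam_sub F G -> fam_sub G F.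

Definition filter (F : fam X) : Prop :=
  upfamily F /\ F (fun _ => True) /\
  forall A B, F A -> F B -> F (fun x => A x /\ B x).

Definition ultrafilter (F : fam X) : Prop :=
  filter F /\ forall G, filter G -> fam_sub F G -> fam_sub G F.

(* the operation  A * B = < U_{a in A} a*B_a : A in A, {B_a}_{a in A} in B > *)
Definition fmul (FA FB : fam X) : fam X := fun C =>
  exists A, FA A /\
  exists Bf : X -> set X,
    (forall a, A a -> FB (Bf a)) /\
    (forall a b, A a -> Bf a b -> C (mul a b)).

Inductive kind := Kbeta | Klambda | Kphi | KN2 | Kupsilon.

Definition inS (k : kind) (F : fam X) : Prop :=
  match k with
  | Kbeta => ultrafilter F
  | Klambda => maximal_linked F
  | Kphi => filter F
  | KN2 => linked F
  | Kupsilon => upfamily F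
  end.

Definition regular (P : fam X -> Prop) : Prop :=
  forall x, P x -> exists y, P y /\ fam_eq x (fmul (fmul x y) x).

Definition upfamily_on (Z : set X) (G : fam X) : Prop :=
  (forall A, G A -> subset A Z /\ nonempty A) /\
  (forall A B, G A -> subset A B -> subset B Z -> G B).

(* F belongs to upsilon(Z), viewed inside upsilon(X) via
   G |-> {A : A cap Z in G} *)
Definition in_upsilon_sub (Z : set X) (F : fam X) : Prop :=
  exists G, upfamily_on Z G /\ forall A, F A <-> G (fun x => A x /\ Z x).

Definition subsemigroup (Z : set X) : Prop :=
  nonempty Z /\ forall x y, Z x -> Z y -> Z (mul x y).

Definition is_ideal (I : set X) : Prop :=
  nonempty I /\ forall x y, I y -> I (mul x y) /\ I (mul y x).

End UpFamilies.

(* Main.v *)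
Require Import Defs.
From mathcomp Require classical_sets boolp.
From Stdlib Require Import Classical.
Set Implicit Arguments.

Lemma myzorn (T : Type) (t0 : T) (R : T -> T -> Prop) :
 (forall t, R t t) -> (forall r s t, R r s -> R s t -> R r t) ->
 (forall A : T -> Prop, (forall s t, A s -> A t -> R s t \/ R t s) ->
     exists t, forall s, A s -> R s t) ->
 exists t, forall s, R t s -> R s t.
Proof.
 intros Hr Ht Hc.
 destruct (@classical_sets.ZL_preorder T t0 (fun s t => boolp.asbool (R s t))) as [t Ht0].
 - intro t; apply boolp.asboolT; auto.
 - intros r s u H1 H2; apply boolp.asboolT; apply boolp.asboolW in H1; apply boolp.asboolW in H2; eauto.
 - intros A HA. destruct (Hc A) as [u Hu].
   + intros s u As Au; destruct (HA s u As Au); [left|right]; apply boolp.asboolW; auto.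
   + exists u; intros s As; apply boolp.asboolT; auto.
 - exists t; intros s H; apply boolp.asboolW, Ht0, boolp.asboolT; auto.
Qed.
Definition inter (X : Type) (A Z : set X) : set X := fun x => A x /\ Z x.

Lemma fmul_mono X (mul : X -> X -> X) A A' B B' :
  fam_sub A A' -> fam_sub B B' -> fam_sub (fmul mul A B) (fmul mul A' B').
Proof.
  intros HA HB C [D [HD [Bf [H1 H2]]]].
  exists D; split; [auto|]. exists Bf; split; auto.
Qed.

Lemma fmul_linked X (mul : X -> X -> X) A B :
  linked A -> linked B -> linked (fmul mul A B).
Proof.
  intros [[An Au] Al] [[Bn Bu] Bl]. split; [split|].
  - intros C [D [HD [Bf [H1 H2]]]].
    destruct (An _ HD) as [a Ha]. destruct (Bn _ (H1 a Ha)) as [b Hb].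
    exists (mul a b); auto.
  - intros C C' [D [HD [Bf [H1 H2]]]] HC.
    exists D; split; [auto|]. exists Bf; split; [auto|]. intros a b Ha Hb; apply HC; auto.
  - intros C C' [D [HD [Bf [H1 H2]]]] [D' [HD' [Bf' [H1' H2']]]].
    destruct (Al _ _ HD HD') as [a [Ha Ha']].
    destruct (Bl _ _ (H1 a Ha) (H1' a Ha')) as [b [Hb Hb']].
    exists (mul a b); auto.
Qed.

Lemma closed_upsilon X (Z : set X) (G : fam X) :
  upfamily G -> (forall A, G A -> G (inter A Z)) -> in_upsilon_sub Z G.
Proof.
  intros [Gn Gu] Gc. exists (fun A => G A /\ subset A Z). split; [split|].
  - intros A [HA HZ]; auto.
  - intros A B [HA _] HAB HBZ; split; [eapply Gu; eauto | auto].
  - intro A; split.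
    + intro HA; split; [apply (Gc _ HA)| intros x [_ h]; exact h].
    + intros [HA _]; eapply Gu; [exact HA|]. intros x [h _]; exact h.
Qed.

Lemma key X (mul : X -> X -> X) (Z : set X) (F y : fam X) :
  is_ideal mul (fun x => ~ Z x) -> upfamily F -> upfamily y ->
  in_upsilon_sub Z F -> fam_eq F (fmul mul (fmul mul F y) F) ->
  fam_sub F (fmul mul (fmul mul F (fun A => y (inter A Z))) F).
Proof.
  intros [_ Hid] [Fn Fu] [yn yu] [G [[Gs Gu] HG]] Heq C HC.
  assert (HCZ : F (inter C Z)).
  { apply HG. apply HG in HC. eapply Gu; [exact HC| |].
    - intros x [h1 h2]; split; [split|]; auto.
    - intros x [_ h]; exact h. }
  apply Heq in HCZ. destruct HCZ as [D [HD [Df [H1 H2]]]].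
  assert (DZ : forall d, D d -> Z d).
  { intros d Hd. destruct (Fn _ (H1 d Hd)) as [e He].
    apply NNPP; intro nd. destruct (Hid e d nd) as [_ h].
    apply h. exact (proj2 (H2 d e Hd He)). }
  destruct HD as [A [HA [Bf [K1 K2]]]].
  exists D; split.
  - exists A; split; [exact HA|]. exists Bf; split.
    + intros a Ha. eapply yu; [exact (K1 a Ha)|].
      intros b Hb; split; [exact Hb|].
      apply NNPP; intro nb. destruct (Hid a b nb) as [h _].
      apply h, DZ, K2; auto.
    + exact K2.
  - exists Df; split; [exact H1|]. intros d e Hd He. exact (proj1 (H2 d e Hd He)).
Qed.

Lemma lambda_ext X (Z : set X) (y0 : fam X) :
  linked y0 -> y0 Z -> (forall A, y0 A -> y0 (inter A Z)) ->
  exists M, maximal_linked M /\ fam_sub y0 M /\ (forall A, M A -> M (inter A Z)).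
Proof.
  intros Hl HZ Hc.
  set (P := fun G : fam X => linked G /\ fam_sub y0 G /\ (forall A, G A -> G (inter A Z))).
  assert (P0 : P y0) by (split; [exact Hl | split; [intros A h; exact h | exact Hc]]).
  destruct (@myzorn {G : fam X | P G} (exist _ y0 P0)
     (fun s t => fam_sub (proj1_sig s) (proj1_sig t))) as [[M PM] HM].
  - intros t A h; exact h.
  - intros r s t h1 h2 A h; auto.
  - intros Ch Htot.
    set (U := fun B => y0 B \/ exists s, Ch s /\ proj1_sig s B).
    assert (PU : P U).
    { split; [split; [split|]|split].
      - intros B [h|[s [_ h]]].
        + destruct Hl as [[n _] _]; auto.
        + destruct (proj2_sig s) as [[[n _] _] _]; auto.
      - intros B C [h|[s [hs h]]] hBC.
        + left; destruct Hl as [[_ u] _]; eauto.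
        + right; exists s; split; [exact hs|].
          destruct (proj2_sig s) as [[[_ u] _] _]; eauto.
      - intros B C [h|[s [hs h]]] [h'|[s' [hs' h']]].
        + destruct Hl as [_ l]; auto.
        + destruct (proj2_sig s') as [[_ l] [sub _]]; auto.
        + destruct (proj2_sig s) as [[_ l] [sub _]]; auto.
        + destruct (Htot s s' hs hs') as [r|r].
          * destruct (proj2_sig s') as [[_ l] _]; auto.
          * destruct (proj2_sig s) as [[_ l] _]; auto.
      - intros B h; left; exact h.
      - intros B [h|[s [hs h]]].
        + left; auto.
        + right; exists s; split; [exact hs|].
          destruct (proj2_sig s) as [_ [_ c]]; auto. }
    exists (exist _ U PU). intros s hs B h; simpl. right; exists s; auto.
  - exists M. destruct PM as [ML [Msub Mc]]. split; [split; [exact ML|] | split; auto].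
    intros H [[Hn Hu] Hl'] MH B HB.
    set (Mp := fun C => M C \/ subset (inter B Z) C).
    destruct ML as [[Mn Mu] Ml].
    assert (MZ : M Z) by auto.
    destruct (Hl' _ _ HB (MH _ MZ)) as [x0 [xb xz]].
    assert (PMp : P Mp).
    { split; [split; [split|]|split].
      - intros C [h|h]; auto. exists x0; apply h; split; auto.
      - intros C D [h|h] hCD; [left; eauto | right; intros x hx; auto].
      - intros C D [h|h] [h'|h'].
        + auto.
        + destruct (Hl' _ _ HB (MH _ (Mc _ h))) as [x [h1 [h2 h3]]].
          exists x; split; auto. apply h'; split; auto.
        + destruct (Hl' _ _ HB (MH _ (Mc _ h'))) as [x [h1 [h2 h3]]].
          exists x; split; auto. apply h; split; auto.
        + exists x0; split; [apply h|apply h']; split; auto.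
      - intros C h; left; auto.
      - intros C [h|h]; [left; auto| right].
        intros x hx; split; [apply h; auto | apply hx]. }
    assert (R := HM (exist _ Mp PMp)). simpl in R.
    assert (hB : M (inter B Z)).
    { apply R; [intros C h; left; exact h | right; intros x h; exact h]. }
    eapply Mu; [exact hB|]. intros x [h _]; exact h.
Qed.

Lemma inS_up X (k : kind) (F : fam X) : inS k F -> upfamily F.
Proof.
  destruct k; simpl; intro h.
  - exact (proj1 (proj1 h)).
  - exact (proj1 (proj1 h)).
  - exact (proj1 h).
  - exact (proj1 h).
  - exact h.
Qed.

Theorem corollary3p4 (X : Type) (mul : X -> X -> X)
  (assoc : forall x y z, mul x (mul y z) = mul (mul x y) z)
  (k : kind) :
  regular mul (inS k) ->
  forall Z : set X,
    subsemigroup mul Z ->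
    is_ideal mul (fun x => ~ Z x) ->
    regular mul (fun F => inS k F /\ in_upsilon_sub Z F).
Proof.
  intros Hreg Z HZsg Hid F [HFS HFU].
  destruct (classic (exists A, F A)) as [[A0 HA0]|Hne].
  2:{ exists F; split; [split; auto|]. intro C; split.
      - intro h; exfalso; apply Hne; eauto.
      - intros [D [[E [hE _]] _]]. exfalso; apply Hne; eauto. }
  destruct (Hreg F HFS) as [y [HyS Heq]].
  pose proof (inS_up _ _ HFS) as FU. pose proof (inS_up _ _ HyS) as yU.
  pose proof (key Hid FU yU HFU Heq) as HK.
  set (y0 := fun A => y (inter A Z)) in HK.
  destruct FU as [Fn Fu]. destruct yU as [yn yu].
  assert (yZ : y Z).
  { destruct (HK _ HA0) as [D [[A [HA [Bf [K1 _]]]] _]].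
    destruct (Fn A HA) as [a Ha]. eapply yu; [exact (K1 a Ha)|].
    intros x [_ h]; exact h. }
  assert (y0y : fam_sub y0 y).
  { intros A h; eapply yu; [exact h|]. intros x [h1 _]; exact h1. }
  assert (eq0 : forall y', fam_sub y0 y' -> fam_sub y' y ->
                 fam_eq F (fmul mul (fmul mul F y') F)).
  { intros y' h1 h2 C; split.
    - intro hC. eapply fmul_mono; [| intros A h; exact h | apply HK; exact hC].
      apply fmul_mono; [intros A h; exact h | exact h1].
    - intro hC. apply Heq. eapply fmul_mono; [| intros A h; exact h | exact hC].
      apply fmul_mono; [intros A h; exact h | exact h2]. }
  assert (y0U : upfamily y0).
  { split.
    - intros A h. destruct (yn _ h) as [x [hx _]]; exists x; exact hx.
    - intros A B h hAB. eapply yu; [exact h|]. intros x [h1 h2]; split; auto. }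
  assert (y0c : forall A, y0 A -> y0 (inter A Z)).
  { intros A h. eapply yu; [exact h|]. intros x [h1 h2]; split; [split|]; auto. }
  assert (y0r : fam_sub y0 y0) by (intros A h; exact h).
  destruct k; simpl in *.
  -
    exists y; split; [split; [exact HyS|]| exact Heq].
    apply closed_upsilon; [split; auto|].
    intros A h. destruct HyS as [[_ [_ Hi]] _]. exact (Hi _ _ h yZ).
  -
    assert (y0L : linked y0).
    { split; [exact y0U|]. intros A B hA hB.
      destruct HyS as [[_ l] _]. destruct (l _ _ hA hB) as [x [[h1 _] [h2 _]]].
      exists x; auto. }
    assert (yZ' : y0 Z).
    { eapply yu; [exact yZ|]. intros x h; split; exact h. }
    destruct (@lambda_ext X Z y0 y0L yZ' y0c) as [M [ML [Msub Mc]]].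
    exists M; split; [split; [exact ML|apply closed_upsilon; [exact (proj1 (proj1 ML))|exact Mc]]|].
    intro C; split.
    + intro hC. eapply fmul_mono; [| intros A h; exact h | apply HK; exact hC].
      apply fmul_mono; [intros A h; exact h | exact Msub].
    + intro hC. destruct HFS as [FL Fmax].
      apply (Fmax (fmul mul (fmul mul F M) F)); [| | exact hC].
      * apply fmul_linked; [apply fmul_linked; [exact FL | exact (proj1 ML)] | exact FL].
      * intros A h. eapply fmul_mono; [| intros B h'; exact h' | apply HK; exact h].
        apply fmul_mono; [intros B h'; exact h' | exact Msub].
  -
    exists y; split; [split; [exact HyS|]| exact Heq].
    apply closed_upsilon; [split; auto|].
    intros A h. destruct HyS as [_ [_ Hi]]. exact (Hi _ _ h yZ).
  -
    exists y0; split; [split; [|apply closed_upsilon; auto]| apply eq0; auto].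
    split; [exact y0U|]. intros A B hA hB.
    destruct HyS as [_ l]. destruct (l _ _ hA hB) as [x [[h1 _] [h2 _]]].
    exists x; auto.
  - exists y0; split; [split; [exact y0U|apply closed_upsilon; auto]| apply eq0; auto].
Qed.
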